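(* Let $\Lambda\subset\mathbb Z^n$ be an orthogonal sublattice. Then $\Lambda$ is cubiquitous if and only if, up to a change of basis of $\mathbb Z^n$, $\Lambda$ admits a basis $\{b_1,\ldots,b_n\}$ such that the matrix $B=\begin{bmatrix} b_1&\cdots&b_n\end{bmatrix}$ is a block (diagonal) matrix each of whose blocks is one of $$\begin{bmatrix}1\end{bmatrix},\qquad \begin{bmatrix}2\end{bmatrix},\qquad \begin{bmatrix}1&-1\\1&1\end{bmatrix}.$$
   Context: $\mathbb Z^n$ carries the standard dot product $\langle\cdot,\cdot\rangle$ with standard basis $e_1,\ldots,e_n$. A ''change of basis of $\mathbb Z^n$'' means replacing the standard basis by another orthonormal basis, i.e. applying an automorphism of $\mathbb Z^n$ preserving the dot product (a signed permutation of coordinates). A sublattice $\Lambda\subset\mathbb Z^n$ is full-rank if $\mathrm{rank}\,\Lambda=n$. An orthogonal sublattice is a full-rank sublattice of $\mathbb Z^n$ admitting a basis of pairwise orthogonal vectors. A full-rank sublattice $\Lambda\subset\mathbb Z^n$ is cubiquitous if $\Lambda\cap(x+\{0,1\}^n)\neq\emptyset$ for every $x\in\mathbb Z^n$. *)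

(* Defs.v *)
From mathcomp Require Import all_boot all_order all_algebra.
Set Implicit Arguments. Unset Strict Implicit. Unset Printing Implicit Defensive.
Import Order.TTheory GRing.Theory Num.Theory.
Local Open Scope ring_scope.

Definition is_basis_of (n : nat) (L : 'cV[int]_n -> Prop) (B : 'M[int]_n) : Prop :=
  (forall x : 'cV[int]_n, L x <-> exists c : 'cV[int]_n, x = B *m c)
  /\ \det B != 0.

Definition full_rank_sublattice (n : nat) (L : 'cV[int]_n -> Prop) : Prop :=
  exists B : 'M[int]_n, is_basis_of L B.

Definition dotZ (n : nat) (u v : 'cV[int]_n) : int := \sum_(k < n) u k 0 * v k 0.

Definition orthogonal_sublattice (n : nat) (L : 'cV[int]_n -> Prop) : Prop :=
  exists B : 'M[int]_n, is_basis_of L B /\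
    forall i j : 'I_n, i != j -> dotZ (col i B) (col j B) = 0.

Definition cubiquitous (n : nat) (L : 'cV[int]_n -> Prop) : Prop :=
  forall x : 'cV[int]_n, exists y : 'cV[int]_n,
    L y /\ forall i : 'I_n, (y i 0 - x i 0 == 0) || (y i 0 - x i 0 == 1).

(* change of basis of Z^n: an automorphism of Z^n preserving the dot product,
   i.e. an integer matrix P with P^T P = 1 (these are exactly signed permutations) *)
Definition change_of_basis (n : nat) (P : 'M[int]_n) : Prop :=
  P^T *m P = 1%:M.

(* The three allowed diagonal blocks: [1], [2], [[1,-1],[1,1]]. *)
Inductive blk := Blk1 | Blk2 | Blk3.

Definition blk_size (b : blk) : nat := match b with Blk1 => 1 | Blk2 => 1 | Blk3 => 2 end.

Definition blks_size (ks : seq blk) : nat := sumn (map blk_size ks).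

Fixpoint blkdiag_entry (ks : seq blk) (i j : nat) : int :=
  match ks with
  | [::] => 0
  | Blk1 :: ks' =>
      if (i == 0)%N && (j == 0)%N then 1
      else if (i == 0)%N || (j == 0)%N then 0
      else blkdiag_entry ks' i.-1 j.-1
  | Blk2 :: ks' =>
      if (i == 0)%N && (j == 0)%N then 2
      else if (i == 0)%N || (j == 0)%N then 0
      else blkdiag_entry ks' i.-1 j.-1
  | Blk3 :: ks' =>
      if (i < 2)%N && (j < 2)%N then
        (if (i == 0)%N && (j == 1)%N then -1 else 1)
      else if (i < 2)%N || (j < 2)%N then 0
      else blkdiag_entry ks' (i - 2) (j - 2)
  end.

Definition allowed_block_diag (n : nat) (B : 'M[int]_n) : Prop :=
  exists ks : seq blk, blks_size ks = n /\
    B = \matrix_(i < n, j < n) blkdiag_entry ks i j.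

(* Main.v *)
Require Import Defs.
From mathcomp Require Import all_boot all_order all_algebra.
From mathcomp Require Import fingroup perm zify ring lra.
Set Implicit Arguments. Unset Strict Implicit. Unset Printing Implicit Defensive.
Import Order.TTheory GRing.Theory Num.Theory.
Local Open Scope ring_scope.

Definition negp (x : int) : int := if x < 0 then x else 0.
Definition posp (x : int) : int := if 0 < x then x else 0.

Lemma sum_point n (k : 'I_n) (F : 'I_n -> int) :
  (forall i, i != k -> F i = 0) -> \sum_i F i = F k.
Proof.
move=> H; rewrite (bigD1 k) //= big1 ?addr0 // => i /H.
Qed.

Lemma sum_ge_term n (k : 'I_n) (F : 'I_n -> int) :
  (forall i, 0 <= F i) -> F k <= \sum_i F i.
Proof.
move=> H; rewrite (bigD1 k) //= lerDl sumr_ge0 //.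
Qed.

Lemma sum_ge_2terms n (k l : 'I_n) (F : 'I_n -> int) :
  k != l -> (forall i, 0 <= F i) -> F k + F l <= \sum_i F i.
Proof.
move=> kl H; rewrite (bigD1 k) //= (bigD1 l) 1?eq_sym //= addrA lerDl sumr_ge0 //.
Qed.

Lemma e_bounds (e b : int) : (e = 0 \/ e = 1) -> negp b <= e * b <= posp b.
Proof. rewrite /negp /posp; case=> ->; case: ifP; case: ifP; lia. Qed.

Lemma norm_np (b : int) : `|b| = posp b - negp b.
Proof. rewrite /negp /posp; case: ifP; case: ifP; lia. Qed.

Lemma key_ineq n (b : 'I_n -> int) (k : 'I_n) :
  (forall x : 'I_n -> int, exists e : 'I_n -> int, (forall i, e i = 0 \/ e i = 1) /\
     exists c, \sum_i (x i + e i) * b i = c * \sum_i b i * b i) ->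
  b k != 0 -> \sum_i b i * b i <= \sum_i `|b i| + `|b k|.
Proof.
move=> H bk0.
set N := \sum_i b i * b i.
set neg := \sum_i negp (b i).
set pos := \sum_i posp (b i).
have Ha : 0 < `|b k| by rewrite normr_gt0.
set a := `|b k| in Ha *.
set m := (((- neg) %/ a)%Z + 1).
have m1 : - neg < m * a by apply: ltz_ceil.
have m2 : ((- neg) %/ a)%Z * a <= - neg by apply: lez_floor; rewrite gt_eqF.
set sg : int := if b k < 0 then -1 else 1.
have sgb : sg * b k = a by rewrite /sg /a; case: ifP; lia.
have [e [he [c hc]]] := H (fun i => if i == k then sg * m else 0).
set E := \sum_i e i * b i.
have hsum : \sum_i ((if i == k then sg * m else 0) + e i) * b i = m * a + E.
  under eq_bigr => i _ do rewrite mulrDl.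
  rewrite big_split /=; congr (_ + _).
  rewrite (sum_point (k := k) (F := fun i => (if i == k then sg * m else 0) * b i)).
  - by rewrite eqxx -sgb; ring.
  - by move=> i /negbTE ->; rewrite mul0r.
have hE1 : neg <= E by rewrite /E /neg; apply: ler_sum => i _; case/andP: (e_bounds (b i) (he i)).
have hE2 : E <= pos by rewrite /E /pos; apply: ler_sum => i _; case/andP: (e_bounds (b i) (he i)).
have hS : \sum_i `|b i| = pos - neg.
  by rewrite /pos /neg -sumrB; apply: eq_bigr => i _; rewrite norm_np.
have hN : 0 < N.
  have sq0 : forall x : int, 0 <= x * x by move=> x; nia.
  have h1 := @sum_ge_term _ k (fun i => b i * b i) (fun i => sq0 (b i)).
  have h2 : 0 < b k * b k by move: bk0; nia.
  exact: (lt_le_trans h2 h1).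
rewrite hS.
have : N <= m * a + E.
  rewrite hc in hsum; rewrite -hsum.
  have : 0 < m * a + E by lia.
  rewrite -hsum => hp.
  have : (c <= 0) \/ (1 <= c) by lia.
  by case=> h; nia.
move: m2; rewrite -/m.
have -> : ((- neg) %/ a)%Z = m - 1 by rewrite /m; ring.
lia.
Qed.

Lemma nsq (x : int) : `|x| <= x * x.
Proof. have : (x <= -1) \/ (x = 0) \/ (1 <= x) by lia. case=> [h|[h|h]]; nia. Qed.
Lemma x2 (x : int) : 2 <= `|x| -> x * x - `|x| <= `|x| -> `|x| = 2.
Proof. have : (x <= -1) \/ (x = 0) \/ (1 <= x) by lia. case=> [h|[h|h]]; nia. Qed.

Lemma x1 (x : int) : x * x <= `|x| -> `|x| <= 1.
Proof. have : (x <= -1) \/ (x = 0) \/ (1 <= x) by lia. case=> [h|[h|h]]; nia. Qed.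

Lemma col_shape n (b : 'I_n -> int) :
  (forall k, b k != 0 -> \sum_i b i * b i <= \sum_i `|b i| + `|b k|) ->
  (forall i, `|b i| <= 1) \/ (exists M, `|b M| = 2 /\ forall i, i != M -> b i = 0).
Proof.
move=> H.
case: (boolP [forall i, `|b i| <= 1]) => [/forallP h|/forallPn [M hM]]; first by left.
right; exists M.
have f0 : forall i, 0 <= b i * b i - `|b i| by move=> i; have := nsq (b i); lia.
have hF : forall k, b k != 0 -> \sum_i (b i * b i - `|b i|) <= `|b k|.
  move=> k /H hk; rewrite sumrB; move: hk; set S1 := \sum_i b i * b i; set S2 := \sum_i `|b i|; lia.
have bM0 : b M != 0 by move: hM; lia.
have e1 := @sum_ge_term _ M (fun i => b i * b i - `|b i|) f0.
have e2 := hF M bM0.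
have HM : `|b M| = 2 by apply: x2; move: hM e1 e2 => /=; set S := \sum_i _; lia.
split=> // i iM.
have e3 := @sum_ge_2terms _ M i (fun i => b i * b i - `|b i|) (ltac:(by rewrite eq_sym)) f0.
simpl in e3.
case: (boolP (b i == 0)) => [/eqP //|bi0].
have e4 := hF i bi0.
have hb : (b M = 2) \/ (b M = -2) by lia.
have : b M * b M = 4 by case: hb => ->.
have hi1 : `|b i| <= 1.
  apply: x1; move: e2 e3 HM (f0 M) => /=; set S := \sum_i _; lia.
 move: e1 e2 e3 e4 bi0 HM => /=; set S := \sum_i _; lia.
Qed.

Lemma sum_2pt n (m l : 'I_n) (a b : int) (F : 'I_n -> int) : m != l ->
  \sum_i (if i == m then a else if i == l then b else 0) * F i = a * F m + b * F l.
Proof.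
move=> ml; rewrite (bigD1 m) //= (bigD1 l) 1?eq_sym //= eqxx.
rewrite (eq_sym l m) (negbTE ml) eqxx big1 ?addr0 //.
move=> i /andP [im il]; by rewrite (negbTE im) (negbTE il) mul0r.
Qed.

Lemma sum_1pt n (m : 'I_n) (a : int) (F : 'I_n -> int) :
  \sum_i (if i == m then a else 0) * F i = a * F m.
Proof.
rewrite (bigD1 m) //= eqxx big1 ?addr0 // => i im; by rewrite (negbTE im) mul0r.
Qed.

Lemma sq_unit (x : int) : `|x| <= 1 -> x * x = `|x|.
Proof. move=> h; have : (x = -1) \/ (x = 0) \/ (x = 1) by lia. by case=> [->|[->|->]]. Qed.

Lemma psum0 n (F : 'I_n -> int) : (forall i, 0 <= F i) -> \sum_i F i = 0 -> forall i, F i = 0.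
Proof. move=> h0 hs i; exact: (psumr_eq0P (P := xpredT) (fun i _ => h0 i) hs). Qed.

Lemma sum_nz n (F : 'I_n -> int) k : \sum_i F i = 0 -> F k != 0 ->
  (exists i, 0 < F i) /\ (exists i, F i < 0).
Proof.
move=> hs hk; split.
  case: (boolP [exists i, 0 < F i]) => [/existsP //|/existsPn h].
  have h0 : forall i, 0 <= - F i by move=> i; have := h i; lia.
  have := psum0 h0; rewrite sumrN hs oppr0 => /(_ erefl k); move: hk; lia.
case: (boolP [exists i, F i < 0]) => [/existsP //|/existsPn h].
have h0 : forall i, 0 <= F i by move=> i; have := h i; lia.
have := psum0 h0 hs k; move: hk; lia.
Qed.

Lemma extreme n (b e x : 'I_n -> int) p :
  (forall i, `|b i| <= 1) -> (forall i, e i = 0 \/ e i = 1) ->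
  0 < \sum_i b i * b i ->
  \sum_i (x i + e i) * b i = p * \sum_i b i * b i ->
  \sum_i x i * b i = - \sum_i negp (b i) ->
  \sum_i e i * b i = \sum_i negp (b i) \/ \sum_i e i * b i = \sum_i posp (b i).
Proof.
move=> hb he hN hp hx.
have hNb : \sum_i b i * b i = \sum_i posp (b i) - \sum_i negp (b i).
  by rewrite -sumrB; apply: eq_bigr => i _; rewrite sq_unit // norm_np.
have hE1 : \sum_i negp (b i) <= \sum_i e i * b i.
  by apply: ler_sum => i _; case/andP: (e_bounds (b i) (he i)).
have hE2 : \sum_i e i * b i <= \sum_i posp (b i).
  by apply: ler_sum => i _; case/andP: (e_bounds (b i) (he i)).
have hs : \sum_i (x i + e i) * b i = \sum_i x i * b i + \sum_i e i * b i.
  by rewrite -big_split /=; apply: eq_bigr => i _; rewrite mulrDl.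
move: hp; rewrite hs hx hNb.
move: hE1 hE2 hN; rewrite hNb.
set E := \sum_i e i * b i; set P := \sum_i posp (b i); set Q := \sum_i negp (b i).
move=> h1 h2 h3 h4.
have : (p <= 0) \/ (p = 1) \/ (2 <= p) by lia.
case=> [h|[h|h]]; [|lia|]; nia.
Qed.

Lemma determ n (b c e : 'I_n -> int) :
  (forall i, `|b i| <= 1) -> (forall i, e i = 0 \/ e i = 1) ->
  \sum_i b i * c i = 0 ->
  (\sum_i e i * b i = \sum_i negp (b i) \/ \sum_i e i * b i = \sum_i posp (b i)) ->
  \sum_i e i * c i = \sum_i (if b i < 0 then c i else 0) + \sum_i (if b i == 0 then c i * e i else 0).
Proof.
move=> hb he horth [] hE.
  have h0 : forall i, 0 <= e i * b i - negp (b i).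
    by move=> i; case/andP: (e_bounds (b i) (he i)); lia.
  have := psum0 h0; rewrite sumrB hE subrr => /(_ erefl) hi.
  rewrite -big_split /=; apply: eq_bigr => i _.
  move: (hi i); rewrite /negp.
  have : (b i = -1) \/ (b i = 0) \/ (b i = 1) by have := hb i; lia.
  by case: (he i) => ->; case=> [->|[->|->]] /=; lia.
have h0 : forall i, 0 <= posp (b i) - e i * b i.
  by move=> i; case/andP: (e_bounds (b i) (he i)); lia.
have := psum0 h0; rewrite sumrB hE subrr => /(_ erefl) hi.
have -> : \sum_i (if b i < 0 then c i else 0) + \sum_i (if b i == 0 then c i * e i else 0) =
  \sum_i ((if b i < 0 then c i else 0) + (if b i == 0 then c i * e i else 0) + b i * c i).
  by rewrite !big_split /= horth addr0.
apply: eq_bigr => i _.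
move: (hi i); rewrite /posp.
have : (b i = -1) \/ (b i = 0) \/ (b i = 1) by have := hb i; lia.
by case: (he i) => ->; case=> [->|[->|->]] /=; lia.
Qed.

Lemma sqge0 (x : int) : 0 <= x * x.
Proof. by have := nsq x; lia. Qed.

Definition cubH n (b c : 'I_n -> int) :=
  forall x : 'I_n -> int, exists e : 'I_n -> int, (forall i, e i = 0 \/ e i = 1) /\
    (exists p, \sum_i (x i + e i) * b i = p * \sum_i b i * b i) /\
    (exists q, \sum_i (x i + e i) * c i = q * \sum_i c i * c i).

Lemma cubH_sym n (b c : 'I_n -> int) : cubH b c -> cubH c b.
Proof. move=> H x; have [e [he [h1 h2]]] := H x; by exists e. Qed.

Lemma sumD n (x e b : 'I_n -> int) :
  \sum_i (x i + e i) * b i = \sum_i x i * b i + \sum_i e i * b i.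
Proof. by rewrite -big_split /=; apply: eq_bigr => i _; rewrite mulrDl. Qed.

Lemma second_overlap n (b c : 'I_n -> int) k :
  \sum_i b i * c i = 0 -> b k * c k != 0 -> exists k', k' != k /\ b k' * c k' != 0.
Proof.
move=> h hk; have [[i1 h1] [i2 h2]] := sum_nz h hk.
case: (eqVneq i1 k) => [e1|n1]; last by exists i1; split=> //; move: h1; lia.
exists i2; split; last by move: h2; lia.
by apply/eqP => e2; move: h1 h2; rewrite e1 e2; lia.
Qed.

Lemma pairA n (b c : 'I_n -> int) k l :
  (forall i, `|b i| <= 1) -> (forall i, `|c i| <= 1) ->
  \sum_i b i * c i = 0 -> cubH b c ->
  b k != 0 -> c k != 0 -> b l = 0 -> c l != 0 -> False.
Proof.
move=> hb hc horth H bk ck bl cl.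
have kl : k != l by apply/eqP => e; move: bk; rewrite e bl eqxx.
set nb := \sum_i negp (b i).
set K := \sum_i (if b i < 0 then c i else 0).
set nW := \sum_i (if b i == 0 then negp (c i) else 0).
set pW := \sum_i (if b i == 0 then posp (c i) else 0).
set T := - K - nW + 1.
have bk2 : b k * b k = 1 by rewrite sq_unit //; have := hb k; move: bk; lia.
have ck2 : c k * c k = 1 by rewrite sq_unit //; have := hc k; move: ck; lia.
have cl2 : c l * c l = 1 by rewrite sq_unit //; have := hc l; move: cl; lia.
have [e [he [[p hp] [q hq]]]] := H (fun i => if i == k then - nb * b k else
   if i == l then c l * (T - (- nb) * b k * c k) else 0).
rewrite sumD sum_2pt // in hq.
have hNb : 0 < \sum_i b i * b i.
  have := @sum_ge_term _ k (fun i => b i * b i) (fun i => sqge0 (b i)).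
  move=> /= h; rewrite bk2 in h; exact: (lt_le_trans ltr01 h).
have hx : \sum_i (if i == k then - nb * b k else
   if i == l then c l * (T - (- nb) * b k * c k) else 0) * b i = - nb.
  rewrite sum_2pt // bl mulr0 addr0 -mulrA bk2 mulr1 //.
have hext := extreme hb he hNb hp hx.
have hdet := determ hb he horth hext.
rewrite hdet in hq.
set W := \sum_i (if b i == 0 then c i * e i else 0) in hq.
have hW1 : nW <= W.
  apply: ler_sum => i _; case: ifP => // _; rewrite mulrC.
  by case/andP: (e_bounds (c i) (he i)).
have hW2 : W <= pW.
  apply: ler_sum => i _; case: ifP => // _; rewrite mulrC.
  by case/andP: (e_bounds (c i) (he i)).
have bck : b k * c k != 0 by rewrite mulf_neq0.
have := @second_overlap n b c k horth bck; case=> k' [k'k hk'].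
have hNc : \sum_i c i * c i =
   (pW - nW) + \sum_i (if b i == 0 then 0 else `|c i|).
  rewrite /pW /nW -sumrB -big_split /=; apply: eq_bigr => i _.
  rewrite sq_unit // norm_np; case: ifP => _; ring.
have hpos : forall i, 0 <= (fun i => if b i == 0 then 0 else `|c i|) i.
  by move=> i /=; case: ifP => _.
have h2 := @sum_ge_2terms _ k k' (fun i => if b i == 0 then 0 else `|c i|)
   (ltac:(by rewrite eq_sym)) hpos.
simpl in h2.
have hbk' : b k' != 0 by move: hk'; nia.
have hck' : c k' != 0 by move: hk'; nia.
rewrite (negbTE bk) (negbTE hbk') in h2.
have hv : c l * (T - (- nb) * b k * c k) * c l = T - (- nb) * b k * c k.
  by rewrite mulrC mulrA cl2 mul1r.
rewrite hv in hq.
move: hq h2 hNc hW1 hW2; rewrite /T.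
set S := \sum_i (if b i == 0 then 0 else `|c i|).
set Nc := \sum_i c i * c i.
move=> hq h2 hNc hW1 hW2.
have ha : `|c k| = 1 by have := hc k; move: ck; lia.
have hb' : `|c k'| = 1 by have := hc k'; move: hck'; lia.
have : (q <= 0) \/ (1 <= q) by lia.
case=> hh; nia.
Qed.

Lemma prod_pos (x y : int) : `|x| <= 1 -> `|y| <= 1 -> 0 < x * y -> y = x /\ x * x = 1.
Proof.
move=> hx hy; have : (x = -1) \/ (x = 0) \/ (x = 1) by lia.
have : (y = -1) \/ (y = 0) \/ (y = 1) by lia.
by case=> [->|[->|->]]; case=> [->|[->|->]].
Qed.

Lemma prod_neg (x y : int) : `|x| <= 1 -> `|y| <= 1 -> x * y < 0 -> y = - x /\ x * x = 1.
Proof.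
move=> hx hy; have : (x = -1) \/ (x = 0) \/ (x = 1) by lia.
have : (y = -1) \/ (y = 0) \/ (y = 1) by lia.
by case=> [->|[->|->]]; case=> [->|[->|->]].
Qed.

Lemma pairC n (b c : 'I_n -> int) k :
  (forall i, `|b i| <= 1) -> (forall i, `|c i| <= 1) ->
  \sum_i b i * c i = 0 -> cubH b c ->
  (forall i, (b i == 0) = (c i == 0)) -> b k != 0 -> \sum_i b i * b i = 2.
Proof.
move=> hb hc horth H hbc bk.
have ck : c k != 0 by rewrite -hbc.
have bck : b k * c k != 0 by rewrite mulf_neq0.
have [[m hm] [m' hm']] := sum_nz horth bck.
have [cm bm2] := prod_pos (hb m) (hc m) hm.
have [cm' bm'2] := prod_neg (hb m') (hc m') hm'.
have mm' : m != m' by apply/eqP => e; move: hm hm'; rewrite e; lia.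
set nb := \sum_i negp (b i).
set K := \sum_i (if b i < 0 then c i else 0).
set z := - nb - K.
set q := (z %/ 2)%Z. set r := (z %% 2)%Z.
have hz : z = q * 2 + r by apply: divz_eq.
have r0 : 0 <= r by apply: modz_ge0.
have r2 : r < 2 by apply: ltz_pmod.
set P := q + 1. set Q := - nb - P.
have [e [he [[p hp] [q' hq]]]] := H (fun i => if i == m then b m * P else
   if i == m' then b m' * Q else 0).
have hNb : 0 < \sum_i b i * b i.
  have := @sum_ge_term _ m (fun i => b i * b i) (fun i => sqge0 (b i)).
  move=> /= h; rewrite bm2 in h; exact: (lt_le_trans ltr01 h).
have hx : \sum_i (if i == m then b m * P else
   if i == m' then b m' * Q else 0) * b i = - nb.
  rewrite sum_2pt // -!mulrA [P * _]mulrC [Q * _]mulrC !mulrA bm2 bm'2 /Q; ring.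
have hext := extreme hb he hNb hp hx.
have hdet := determ hb he horth hext.
have hW : \sum_i (if b i == 0 then c i * e i else 0) = 0.
  apply: big1 => i _; case: ifP => // /eqP h; move: (hbc i); rewrite h eqxx => /esym/eqP ->.
  by rewrite mul0r.
rewrite sumD sum_2pt // hdet hW addr0 cm cm' in hq.
have hNc : \sum_i c i * c i = \sum_i b i * b i.
  apply: eq_bigr => i _; rewrite !sq_unit //.
  case: (boolP (b i == 0)) => [/eqP h|h].
    by move: (hbc i); rewrite h eqxx => /esym/eqP ->.
  have h' : c i != 0 by rewrite -hbc.
  have := hb i; have := hc i; move: h h'; lia.
rewrite hNc in hq.
have h2 := @sum_ge_2terms _ m m' (fun i => b i * b i) mm' (fun i => sqge0 (b i)).
simpl in h2; rewrite bm2 bm'2 in h2.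
have hv : b m * P * b m + b m' * Q * - b m' + K = 2 - r.
  have -> : b m * P * b m = P * (b m * b m) by ring.
  have -> : b m' * Q * - b m' = - Q * (b m' * b m') by ring.
  rewrite bm2 bm'2 /Q /P; move: hz; rewrite /z; lia.
rewrite hv in hq.
move: hq h2; set N := \sum_i b i * b i => hq h2.
have : (q' <= 0) \/ (1 <= q') by lia.
case=> hh; nia.
Qed.

Lemma pair_lemma n (b c : 'I_n -> int) k :
  (forall i, `|b i| <= 1) -> (forall i, `|c i| <= 1) ->
  \sum_i b i * c i = 0 -> cubH b c -> b k != 0 -> c k != 0 ->
  (forall i, (b i == 0) = (c i == 0)) /\ \sum_i b i * b i = 2.
Proof.
move=> hb hc horth H bk ck.
have hbc : forall i, (b i == 0) = (c i == 0).
  move=> i; case: (boolP (b i == 0)) => [/eqP h1|h1]; case: (boolP (c i == 0)) => [/eqP h2|h2] //.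
    by exfalso; exact: (pairA hb hc horth H bk ck h1 h2).
  exfalso; apply: (pairA hc hb _ (cubH_sym H) ck bk h2 h1).
  by rewrite (eq_bigr (fun i => b i * c i)) // => j _; rewrite mulrC.
split=> //; exact: pairC hb hc horth H hbc bk.
Qed.

Lemma bs_cons X ks : blks_size (X :: ks) = (blk_size X + blks_size ks)%N.
Proof. by []. Qed.

Lemma bd_zero ks (i j : nat) : (blks_size ks <= i)%N || (blks_size ks <= j)%N ->
  blkdiag_entry ks i j = 0.
Proof.
elim: ks i j => [|X ks IH] i j //=.
case: X => /=; rewrite /blks_size /= -/(blks_size ks).
- case: i => [|i]; case: j => [|j] //= h; by apply: IH.
- case: i => [|i]; case: j => [|j] //= h; by apply: IH.
- case: i => [|[|i]]; case: j => [|[|j]] //= h; rewrite !subSS !subn0; by apply: IH.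
Qed.

Lemma bd_rcons ks X (i j : nat) :
  blkdiag_entry (rcons ks X) i j =
  if (i < blks_size ks)%N && (j < blks_size ks)%N then blkdiag_entry ks i j
  else if (i < blks_size ks)%N || (j < blks_size ks)%N then 0
  else blkdiag_entry [:: X] (i - blks_size ks) (j - blks_size ks).
Proof.
elim: ks i j => [|Y ks IH] i j; first by rewrite /= !subn0.
rewrite rcons_cons bs_cons.
case: Y; rewrite /blk_size ?add1n ?add2n.
- case: i => [|i]; case: j => [|j]; rewrite [LHS]/= ?IH ?ltnS ?subSS ?ltn0Sn ?andbT ?orbT //=;
  by case: ifP.
- case: i => [|i]; case: j => [|j]; rewrite [LHS]/= ?IH ?ltnS ?subSS ?ltn0Sn ?andbT ?orbT //=;
  by case: ifP.
- case: i => [|[|i]]; case: j => [|[|j]]; rewrite [LHS]/= ?subSS ?subn0 ?IH ?ltnS ?subSS ?ltn0Sn ?andbT ?orbT //= ?subSS ?subn0 //;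
  by case: ifP.
Qed.

Lemma det_ortho n (B : 'M[int]_n) (w : 'I_n -> int) : \det B != 0 ->
  (forall j, \sum_k w k * B k j = 0) -> forall k, w k = 0.
Proof.
move=> hdet hw k.
set W : 'cV[int]_n := \col_k w k.
have h : B^T *m W = 0.
  apply/matrixP => j z; rewrite !mxE -[RHS](hw j); apply: eq_bigr => i _.
  by rewrite !mxE mulrC.
have : (\det B) *: W = 0 by rewrite -det_tr -mul_scalar_mx -mul_adj_mx -mulmxA h mulmx0.
move/matrixP/(_ k 0); rewrite !mxE => /eqP; rewrite mulf_eq0 (negbTE hdet) /=.
by move/eqP.
Qed.

Definition orthB n (B : 'M[int]_n) := forall i j : 'I_n, i != j -> \sum_k B k i * B k j = 0.

Lemma orthB_of n (B : 'M[int]_n) :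
  (forall i j : 'I_n, i != j -> dotZ (col i B) (col j B) = 0) -> orthB B.
Proof.
move=> h i j ij; transitivity (dotZ (col i B) (col j B)); last exact: h.
by rewrite /dotZ; apply: eq_bigr => k _; rewrite !mxE.
Qed.

Lemma lat_dot n (L : 'cV[int]_n -> Prop) (B : 'M[int]_n) y :
  is_basis_of L B -> orthB B -> L y -> forall j,
  exists c, \sum_k y k 0 * B k j = c * \sum_k B k j * B k j.
Proof.
move=> [hL _] ho /hL [cv ->] j; exists (cv j 0).
under eq_bigr => k _ do rewrite mxE big_distrl /=.
rewrite exchange_big /= (bigD1 j) //= [X in _ + X]big1 ?addr0.
  by rewrite mulr_sumr; apply: eq_bigr => k _; ring.
move=> i ij; transitivity (cv i 0 * \sum_k B k i * B k j); last by rewrite ho // mulr0.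
by rewrite mulr_sumr; apply: eq_bigr => k _; ring.
Qed.

Lemma cubH_mat n (L : 'cV[int]_n -> Prop) (B : 'M[int]_n) :
  cubiquitous L -> is_basis_of L B -> orthB B ->
  forall j j', cubH (fun k => B k j) (fun k => B k j').
Proof.
move=> hc hb ho j j' x.
have [y [Ly hy]] := hc (\col_i x i).
exists (fun i => y i 0 - x i); split.
  move=> i; move: (hy i); rewrite !mxE; case/orP => /eqP ->; by [left|right].
have hyx : forall i, x i + (y i 0 - x i) = y i 0 by move=> i; ring.
split.
  have [c hc'] := lat_dot hb ho Ly j; exists c.
  by rewrite -hc'; apply: eq_bigr => i _; rewrite hyx.
have [c hc'] := lat_dot hb ho Ly j'; exists c.
by rewrite -hc'; apply: eq_bigr => i _; rewrite hyx.
Qed.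

Definition shapeB n (B : 'M[int]_n) := forall j : 'I_n,
  (forall i, `|B i j| <= 1) \/ (exists M, `|B M j| = 2 /\ forall i, i != M -> B i j = 0).

Definition pairB n (B : 'M[int]_n) := forall j j' k : 'I_n, j != j' -> B k j != 0 -> B k j' != 0 ->
  (forall i, `|B i j| <= 1) /\ (forall i, `|B i j'| <= 1) /\
  (forall i, (B i j == 0) = (B i j' == 0)) /\ \sum_i B i j * B i j = 2.

Lemma shape_mat n (L : 'cV[int]_n -> Prop) (B : 'M[int]_n) :
  cubiquitous L -> is_basis_of L B -> orthB B -> shapeB B.
Proof.
move=> hc hb ho j; apply: col_shape => k bk; apply: key_ineq => // x.
have [e [he [h1 _]]] := cubH_mat hc hb ho j j x; by exists e.
Qed.

Lemma pair_mat n (L : 'cV[int]_n -> Prop) (B : 'M[int]_n) :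
  cubiquitous L -> is_basis_of L B -> orthB B -> pairB B.
Proof.
move=> hc hb ho j j' k jj' bk bk'.
have hs := shape_mat hc hb ho.
have small : forall a a', a != a' -> B k a != 0 -> B k a' != 0 -> forall i, `|B i a| <= 1.
  move=> a a' aa' ha ha'; case: (hs a) => // [[M [hM hz]]].
  have kM : k = M by apply/eqP; apply: contraNT ha => /hz ->.
  have := ho a a' aa'; rewrite (@sum_point _ M) => [/eqP|i iM]; last by rewrite hz ?mul0r.
  by rewrite mulf_eq0 -kM (negbTE ha) (negbTE ha').
have h1 := small j j' jj' bk bk'.
have h2 := small j' j (ltac:(by rewrite eq_sym)) bk' bk.
have := pair_lemma h1 h2 (ho j j' jj') (cubH_mat hc hb ho j j') bk bk'.
by case.
Qed.

Lemma bs_rcons ks X : blks_size (rcons ks X) = (blks_size ks + blk_size X)%N.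
Proof. by rewrite /blks_size map_rcons -cats1 sumn_cat /= addn0. Qed.

Lemma perm_fix_ge n m (p : 'S_n) : (forall x : 'I_n, (x < m)%N -> p x = x) ->
  forall x : 'I_n, (m <= x)%N -> (m <= p x)%N.
Proof.
move=> hf x hx; rewrite leqNgt; apply/negP => h.
have := hf _ h => /perm_inj e; move: hx; rewrite -e; lia.
Qed.

Lemma perm1 n m (mo a : 'I_n) : nat_of_ord mo = m -> (m <= a)%N ->
  exists p : 'S_n, (forall x : 'I_n, (x < m)%N -> p x = x) /\ p mo = a.
Proof.
move=> hm ha; exists (tperm mo a); split; last by rewrite tpermL.
move=> x hx; rewrite tpermD //; apply/eqP => e; move: hx; rewrite -?e ?hm; lia.
Qed.

Lemma perm2 n m (mo m1 a b : 'I_n) : nat_of_ord mo = m -> nat_of_ord m1 = m.+1 -> (m <= a)%N -> (m <= b)%N ->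
  a != b ->
  exists p : 'S_n, (forall x : 'I_n, (x < m)%N -> p x = x) /\ p mo = a /\ p m1 = b.
Proof.
move=> hm hm1 ha hb ab.
set b' := tperm mo a b.
have hb' : (m <= b')%N by rewrite /b'; case: tpermP => *; rewrite ?hm.
have b'mo : b' != mo.
  apply/eqP => e; move: ab; rewrite -(tpermK mo a b) -/b' e tpermL eqxx //.
exists (tperm m1 b' * tperm mo a)%g; split; [|split].
- move=> x hx; rewrite permM (tpermD (x := m1)); last 2 first.
    by apply/eqP => e; move: hx; rewrite -e; lia.
    by apply/eqP => e; move: hx; rewrite -e; lia.
  rewrite tpermD //; apply/eqP => e; move: hx; rewrite -e; lia.
- rewrite permM (tpermD (x := m1)) ?tpermL //; apply/eqP => e; move: hm hm1; rewrite e; lia.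
- by rewrite permM tpermL /b' tpermK.
Qed.

Definition cfg n (B : 'M[int]_n) m (sg tu : 'S_n) (s t : 'I_n -> int) ks :=
  blks_size ks = m /\ (forall i, s i * s i = 1) /\ (forall j, t j * t j = 1) /\
   (forall i j : 'I_n, (i < m)%N -> (j < m)%N -> s i * t j * B (sg i) (tu j) = blkdiag_entry ks i j) /\
   (forall i j : 'I_n, (i < m)%N -> (m <= j)%N -> B (sg i) (tu j) = 0) /\
   (forall i j : 'I_n, (j < m)%N -> (m <= i)%N -> B (sg i) (tu j) = 0).

Definition config n (B : 'M[int]_n) m := exists sg tu s t ks, @cfg n B m sg tu s t ks.

Lemma lt_succ n m (mo x : 'I_n) : nat_of_ord mo = m -> (x < m.+1)%N -> (x < m)%N \/ x = mo.
Proof.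
move=> hm; rewrite ltnS leq_eqVlt; case/orP => [/eqP e|]; last by left.
by right; apply: val_inj; rewrite /= e hm.
Qed.

Lemma single_step n (B : 'M[int]_n) m sg tu s t ks (mo j0 : 'I_n) X :
  cfg B m sg tu s t ks -> nat_of_ord mo = m -> B (sg mo) j0 != 0 ->
  (forall k, k != sg mo -> B k j0 = 0) -> (forall c, c != j0 -> B (sg mo) c = 0) ->
  blk_size X = 1%N -> `|B (sg mo) j0| = blkdiag_entry [:: X] 0 0 -> config B m.+1.
Proof.
move=> [hsz [hs [ht [hblk [hz1 hz2]]]]] hm hb0 hcol hrow hX hv.
set k0 := sg mo in hb0 hcol hrow hv.
set j := ((tu^-1)%g j0).
have tuj : tu j = j0 by rewrite /j permKV.
have hj : (m <= j)%N.
  rewrite leqNgt; apply/negP => h; move: hb0; rewrite -tuj hz2 ?eqxx //; by rewrite hm.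
have [p [pfix pmo]] := perm1 hm hj.
set sgn : int := if B k0 j0 < 0 then -1 else 1.
exists sg, (p * tu)%g, (fun x : 'I_n => if (x < m)%N then s x else 1),
  (fun x : 'I_n => if (x < m)%N then t x else if x == mo then sgn else 1), (rcons ks X).
have pge := perm_fix_ge pfix.
split; [ | split; [ | split; [ | split; [ | split]]]].
- by rewrite bs_rcons hsz hX addn1.
- by move=> i; case: ifP.
- by move=> i; case: ifP => // _; case: ifP => // _; rewrite /sgn; case: ifP.
- move=> i x hi hx; rewrite permM bd_rcons hsz.
  case: (lt_succ hm hi) => [hi'|->]; case: (lt_succ hm hx) => [hx'|->].
  + by rewrite hi' hx' /= pfix //; apply: hblk.
  + by rewrite hi' hm ltnn /= pmo hz1 ?mulr0 // hm.
  + by rewrite hx' hm ltnn /= pfix // hz2 ?mulr0 // hm.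
  + by rewrite hm ltnn subnn -hv /= eqxx pmo tuj mul1r /sgn -/k0; case: ifP; lia.
- move=> i x hi hx; rewrite permM.
  case: (lt_succ hm hi) => [hi'|->].
    by apply: hz1 => //; apply: pge; lia.
  apply: hrow; rewrite -tuj; apply/eqP => /perm_inj e.
  by move: hx; rewrite -pmo in e; move/perm_inj: e => ->; rewrite hm ltnn.
- move=> i x hx hi; rewrite permM.
  case: (lt_succ hm hx) => [hx'|->].
    by rewrite pfix // hz2 //; lia.
  rewrite pmo tuj; apply: hcol; apply/eqP => /perm_inj e.
  by move: hi; rewrite e hm ltnn.
Qed.

Lemma pm1 (x : int) : x * x = 1 -> x = 1 \/ x = -1.
Proof. move=> h; have : (x <= -1) \/ (x = 0) \/ (1 <= x) by lia. case=> [h1|[h1|h1]]; nia. Qed.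

Lemma blk3vals (a0 a1 b0 b1 : int) : a0 * a0 = 1 -> a1 * a1 = 1 -> b0 * b0 = 1 -> b1 * b1 = 1 ->
  a0 * b0 + a1 * b1 = 0 ->
  [/\ a0 * 1 * a0 = 1, a0 * - (a0 * b0) * b0 = -1, a1 * 1 * a1 = 1 & a1 * - (a0 * b0) * b1 = 1].
Proof.
move=> /pm1 [] -> /pm1 [] -> /pm1 [] -> /pm1 [] -> //= h; by [split | move: h; lia].
Qed.

Lemma lt_succ2 n m (mo m1 x : 'I_n) : nat_of_ord mo = m -> nat_of_ord m1 = m.+1 ->
  (x < m.+2)%N -> (x < m)%N \/ x = mo \/ x = m1.
Proof.
move=> hm hm1 hx.
have : (x < m)%N \/ (nat_of_ord x = m) \/ (nat_of_ord x = m.+1) by lia.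
case=> [h|[h|h]]; [by left | right; left | right; right]; apply: val_inj => /=; by rewrite h.
Qed.

Lemma pair_step n (B : 'M[int]_n) m sg tu s t ks (mo m1 i1 j0 c0 : 'I_n) :
  cfg B m sg tu s t ks -> nat_of_ord mo = m -> nat_of_ord m1 = m.+1 ->
  (m <= i1)%N -> i1 != mo -> j0 != c0 ->
  B (sg mo) j0 * B (sg mo) j0 = 1 -> B (sg i1) j0 * B (sg i1) j0 = 1 ->
  B (sg mo) c0 * B (sg mo) c0 = 1 -> B (sg i1) c0 * B (sg i1) c0 = 1 ->
  B (sg mo) j0 * B (sg mo) c0 + B (sg i1) j0 * B (sg i1) c0 = 0 ->
  (forall k, k != sg mo -> k != sg i1 -> B k j0 = 0 /\ B k c0 = 0) ->
  (forall d, d != j0 -> d != c0 -> B (sg mo) d = 0 /\ B (sg i1) d = 0) ->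
  config B m.+2.
Proof.
move=> [hsz [hs [ht [hblk [hz1 hz2]]]]] hm hm1 hi1 i1mo j0c0 ha0 ha1 hb0 hb1 horth hsupp hother.
set k0 := sg mo in ha0 hb0 horth hsupp hother.
set k1 := sg i1 in ha1 hb1 horth hsupp hother.
set a0 := B k0 j0 in ha0 horth *. set a1 := B k1 j0 in ha1 horth *.
set b0 := B k0 c0 in hb0 horth *. set b1 := B k1 c0 in hb1 horth *.
set j := ((tu^-1)%g j0). set j2 := ((tu^-1)%g c0).
have tuj : tu j = j0 by rewrite /j permKV.
have tuj2 : tu j2 = c0 by rewrite /j2 permKV.
have nz : forall x : int, x * x = 1 -> x != 0 by move=> x /pm1 [] ->.
have hj : (m <= j)%N.
  rewrite leqNgt; apply/negP => h; move: (nz _ ha0); rewrite /a0 /k0 -tuj hz2 ?eqxx //; by rewrite hm.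
have hj2 : (m <= j2)%N.
  rewrite leqNgt; apply/negP => h; move: (nz _ hb0); rewrite /b0 /k0 -tuj2 hz2 ?eqxx //; by rewrite hm.
have jj2 : j != j2 by apply/eqP => e; move: j0c0; rewrite -tuj -tuj2 e eqxx.
have [p [pfix [pmo pm1']]] := perm2 hm hm1 hj hj2 jj2.
have [r [rfix [rmo rm1]]] := perm2 hm hm1 (ltac:(by rewrite hm) : (m <= mo)%N) hi1 (ltac:(by rewrite eq_sym)).
have f1 : (m.+1 < m)%N = false by lia.
have pge := perm_fix_ge pfix.
have rge := perm_fix_ge rfix.
have [v1 v2 v3 v4] := blk3vals ha0 ha1 hb0 hb1 horth.
have mom1 : mo != m1 by apply/eqP => e; move: hm hm1; rewrite e; lia.
have ge2 : forall x : 'I_n, (m.+2 <= x)%N -> [/\ x != mo, x != m1 & (m <= x)%N].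
  move=> x hx; split; [apply/eqP => e; move: hx; rewrite e hm; lia|
    apply/eqP => e; move: hx; rewrite e hm1; lia| lia].
exists (r * sg)%g, (p * tu)%g,
  (fun x : 'I_n => if (x < m)%N then s x else if x == mo then a0 else if x == m1 then a1 else 1),
  (fun x : 'I_n => if (x < m)%N then t x else if x == mo then 1 else if x == m1 then - (a0 * b0) else 1),
  (rcons ks Blk3).
split; [ | split; [ | split; [ | split; [ | split]]]].
- by rewrite bs_rcons hsz addn2.
- move=> i; case: ifP => // _; case: ifP => // _; case: ifP => // _.
- move=> i; case: ifP => // _; case: ifP => // _; case: ifP => // _.
  move: ha0 hb0; rewrite -/a0 -/b0; nia.
- move=> i x hi hx; rewrite !permM bd_rcons hsz.
  case: (lt_succ2 hm hm1 hi) => [hi'|[->|->]]; case: (lt_succ2 hm hm1 hx) => [hx'|[->|->]].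
  + by rewrite hi' hx' /= pfix // rfix //; apply: hblk.
  + by rewrite hi' hm ltnn /= pmo hz1 ?mulr0 // rfix.
  + by rewrite hi' hm1 f1 /= pm1' hz1 ?mulr0 // rfix.
  + by rewrite hx' hm ltnn /= pfix // rmo hz2 ?mulr0 // hm.
  + by rewrite hm ltnn subnn /= eqxx rmo pmo tuj.
  + rewrite hm hm1 ltnn f1 subnn subSnn /= eqxx rmo pm1' tuj2 (eq_sym m1 mo) (negbTE mom1) eqxx.
    by rewrite -/k0 -/b0 v2.
  + by rewrite hx' hm1 f1 /= pfix // rm1 hz2 ?mulr0.
  + rewrite hm hm1 ltnn f1 subnn subSnn /= eqxx eq_sym (negbTE mom1) eqxx rm1 pmo tuj.
    by rewrite -/k1 -/a1 v3.
  + rewrite hm1 f1 subSnn /= eq_sym (negbTE mom1) eqxx rm1 pm1' tuj2.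
    by rewrite -/k1 -/b1 v4.
- move=> i x hi hx; rewrite !permM.
  have [xmo xm1 xm] := ge2 x hx.
  have hd1 : tu (p x) != j0 by rewrite -tuj -pmo; apply/eqP => /perm_inj/perm_inj e; move: xmo; rewrite e eqxx.
  have hd2 : tu (p x) != c0 by rewrite -tuj2 -pm1'; apply/eqP => /perm_inj/perm_inj e; move: xm1; rewrite e eqxx.
  case: (lt_succ2 hm hm1 hi) => [hi'|[->|->]].
  + by rewrite rfix // hz1 //; apply: pge.
  + by rewrite rmo; case: (hother _ hd1 hd2).
  + by rewrite rm1; case: (hother _ hd1 hd2).
- move=> i x hx hi; rewrite !permM.
  have [imo im1 im] := ge2 i hi.
  have hr1 : sg (r i) != k0 by rewrite /k0 -rmo; apply/eqP => /perm_inj/perm_inj e; move: imo; rewrite e eqxx.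
  have hr2 : sg (r i) != k1 by rewrite /k1 -rm1; apply/eqP => /perm_inj/perm_inj e; move: im1; rewrite e eqxx.
  case: (lt_succ2 hm hm1 hx) => [hx'|[->|->]].
  + by rewrite pfix // hz2 //; apply: rge.
  + by rewrite pmo tuj; case: (hsupp _ hr1 hr2).
  + by rewrite pm1' tuj2; case: (hsupp _ hr1 hr2).
Qed.

Lemma three_col (a0 a1 b0 b1 d0 d1 : int) :
  a0 * a0 = 1 -> a1 * a1 = 1 -> b0 * b0 = 1 -> b1 * b1 = 1 -> d0 * d0 = 1 -> d1 * d1 = 1 ->
  a0 * b0 + a1 * b1 = 0 -> a0 * d0 + a1 * d1 = 0 -> b0 * d0 + b1 * d1 = 0 -> False.
Proof.
move=> /pm1 [] -> /pm1 [] -> /pm1 [] -> /pm1 [] -> /pm1 [] -> /pm1 [] -> //=; lia.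
Qed.

Lemma sum_two n (k0 k1 : 'I_n) (F : 'I_n -> int) : k0 != k1 ->
  (forall k, k != k0 -> k != k1 -> F k = 0) -> \sum_i F i = F k0 + F k1.
Proof.
move=> h hF; rewrite (bigD1 k0) //= (bigD1 k1) 1?eq_sym //= [X in _ + (_ + X)]big1 ?addr0 //.
by move=> i /andP [i0 i1]; apply: hF.
Qed.

Lemma rest_zero n (k0 k1 : 'I_n) (F : 'I_n -> int) : k0 != k1 -> (forall i, 0 <= F i) ->
  \sum_i F i = F k0 + F k1 -> forall k, k != k0 -> k != k1 -> F k = 0.
Proof.
move=> h h0; rewrite (bigD1 k0) //= (bigD1 k1) 1?eq_sym //=.
set S := \sum_(i | _) F i => hs0.
have hs : S = 0 by move: hs0; lia.
move=> k kk0 kk1.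
by apply: (psumr_eq0P (P := fun i => (i != k0) && (i != k1))) => //; rewrite kk0 kk1.
Qed.

Lemma sq1 (x : int) : `|x| <= 1 -> x != 0 -> x * x = 1.
Proof. move=> h1 h2; rewrite sq_unit //; lia. Qed.

Lemma step n (B : 'M[int]_n) m sg tu s t ks :
  \det B != 0 -> orthB B -> shapeB B -> pairB B ->
  cfg B m sg tu s t ks -> (m < n)%N -> exists m', (m < m')%N /\ (m' <= n)%N /\ config B m'.
Proof.
move=> hdet ho hs hp hc mn.
have hc' := hc; move: hc' => [hsz [hss [hts [hblk [hz1 hz2]]]]].
set mo : 'I_n := Ordinal mn.
have hm : nat_of_ord mo = m by [].
set k0 := sg mo.
have [j0 hj0] : exists j0, B k0 j0 != 0.
  case: (boolP [exists j0, B k0 j0 != 0]) => [/existsP //|/existsPn h].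
  have H0 : forall j, \sum_k (fun k => if k == k0 then 1 else 0) k * B k j = 0.
    move=> j; rewrite (@sum_1pt _ k0 1 (fun k => B k j)) mul1r.
    by move: (h j); rewrite negbK => /eqP.
  by have := det_ortho hdet H0 k0; rewrite /= eqxx.
case: (hs j0) => [hsm|[M [hM hMz]]]; last first.
  have kM : k0 = M by apply/eqP; apply: contraNT hj0 => /hMz ->.
  exists m.+1; split=> //; split=> //.
  apply: (@single_step _ B m sg tu s t ks mo j0 Blk2) => //.
  - by move=> k; rewrite -/k0 kM => /hMz.
  - move=> c cj0; have := ho j0 c (ltac:(by rewrite eq_sym)).
    rewrite (@sum_point _ k0) => [/eqP|i ik]; last by rewrite kM in ik; rewrite hMz ?mul0r.
    by rewrite mulf_eq0 (negbTE hj0) => /eqP.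
  - by rewrite -/k0 kM hM.
case: (boolP [exists k1, (k1 != k0) && (B k1 j0 != 0)]) => [/existsP [k1 /andP [k1k0 hk1]]|/existsPn hno].
  have [c0 [c0j0 hc0]] : exists c0, c0 != j0 /\ (B k0 c0 != 0 \/ B k1 c0 != 0).
    case: (boolP [exists c0, (c0 != j0) && ((B k0 c0 != 0) || (B k1 c0 != 0))]).
      by move/existsP => [c0 /andP [h1 /orP h2]]; exists c0.
    move/existsPn => hn.
    suff H0 : forall j, \sum_k (fun k => (if k == k0 then B k1 j0 else 0) - (if k == k1 then B k0 j0 else 0)) k * B k j = 0.
      have := det_ortho hdet H0 k0; rewrite /= eqxx eq_sym (negbTE k1k0) subr0 => /eqP.
      by rewrite (negbTE hk1).
    move=> j /=; under eq_bigr => k _ do rewrite mulrBl.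
    rewrite sumrB (@sum_1pt _ k0 _ (fun k => B k j)) (@sum_1pt _ k1 _ (fun k => B k j)).
    case: (eqVneq j j0) => [->|jj0]; first by ring.
    move: (hn j); rewrite jj0 /= negb_or !negbK => /andP [/eqP -> /eqP ->]; ring.
  have [kk [hkk1 hkk2]] : exists kk, B kk j0 != 0 /\ B kk c0 != 0.
    by case: hc0 => h; [exists k0 | exists k1].
  have [hbj [hbc [hsup h2]]] := hp j0 c0 kk (ltac:(by rewrite eq_sym)) hkk1 hkk2.
  have sq0 : forall i, 0 <= B i j0 * B i j0 by move=> i; apply: sqge0.
  have ha0 := sq1 (hbj k0) hj0.
  have ha1 := sq1 (hbj k1) hk1.
  have k0k1 : k0 != k1 by rewrite eq_sym.
  have hrest := rest_zero k0k1 sq0 (etrans h2 (esym (etrans (congr2 _ ha0 ha1) erefl))).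
  have hj0z : forall k, k != k0 -> k != k1 -> B k j0 = 0.
    by move=> k h1 h3; have := hrest k h1 h3; move/eqP; rewrite mulf_eq0 orbb => /eqP.
  have hc0z : forall k, k != k0 -> k != k1 -> B k c0 = 0.
    by move=> k h1 h3; apply/eqP; rewrite -hsup; apply/eqP; apply: hj0z.
  have hb0 : B k0 c0 * B k0 c0 = 1 by apply: sq1 => //; rewrite -hsup.
  have hb1 : B k1 c0 * B k1 c0 = 1 by apply: sq1 => //; rewrite -hsup.
  have horth : B k0 j0 * B k0 c0 + B k1 j0 * B k1 c0 = 0.
    rewrite -(ho j0 c0 (ltac:(by rewrite eq_sym))) (@sum_two _ k0 k1) //.
    by move=> k h1 h3; rewrite hj0z ?mul0r.
  have hother : forall d, d != j0 -> d != c0 -> B k0 d = 0 /\ B k1 d = 0.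
    move=> d dj0 dc0.
    suff : ~ (B k0 d != 0 \/ B k1 d != 0).
      by move=> h; split; apply/eqP; apply: contraT => h'; exfalso; apply: h; by [left | right].
    move=> hd.
    have [kd [hkd1 hkd2]] : exists kd, B kd j0 != 0 /\ B kd d != 0.
      by case: hd => h; [exists k0 | exists k1].
    have [_ [hdd [hsupd _]]] := hp j0 d kd (ltac:(by rewrite eq_sym)) hkd1 hkd2.
    have hd0 : B k0 d * B k0 d = 1 by apply: sq1 => //; rewrite -hsupd.
    have hd1 : B k1 d * B k1 d = 1 by apply: sq1 => //; rewrite -hsupd.
    have hdz : forall k, k != k0 -> k != k1 -> B k d = 0.
      by move=> k h1 h3; apply/eqP; rewrite -hsupd; apply/eqP; apply: hj0z.
    have o1 : B k0 j0 * B k0 d + B k1 j0 * B k1 d = 0.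
      rewrite -(ho j0 d (ltac:(by rewrite eq_sym))) (@sum_two _ k0 k1) //.
      by move=> k h1 h3; rewrite hj0z ?mul0r.
    have o2 : B k0 c0 * B k0 d + B k1 c0 * B k1 d = 0.
      rewrite -(ho c0 d (ltac:(by rewrite eq_sym))) (@sum_two _ k0 k1) //.
      by move=> k h1 h3; rewrite hc0z ?mul0r.
    exact: (three_col ha0 ha1 hb0 hb1 hd0 hd1 horth o1 o2).
  set i1 := ((sg^-1)%g k1).
  have sgi1 : sg i1 = k1 by rewrite /i1 permKV.
  have i1mo : i1 != mo by apply/eqP => e; move: k1k0; rewrite -sgi1 e eqxx.
  set j := ((tu^-1)%g j0).
  have tuj : tu j = j0 by rewrite /j permKV.
  have hj : (m <= j)%N.
    rewrite leqNgt; apply/negP => h; move: hj0; rewrite /k0 -tuj hz2 ?eqxx //.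
  have hi1 : (m <= i1)%N.
    rewrite leqNgt; apply/negP => h; move: hk1; rewrite -sgi1 -tuj hz1 ?eqxx //.
  have hi1' : (m < i1)%N.
    have : nat_of_ord i1 != m by apply: contra i1mo => /eqP e; apply/eqP/val_inj; rewrite /= e.
    move: hi1; lia.
  have m1n : (m.+1 < n)%N by apply: (leq_ltn_trans hi1' (ltn_ord i1)).
  set m1 : 'I_n := Ordinal m1n.
  exists m.+2; split=> //; split=> //.
  apply: (@pair_step _ B m sg tu s t ks mo m1 i1 j0 c0) => //; rewrite ?sgi1 //; try by rewrite eq_sym.
  by move=> k h1 h3; split; [apply: hj0z | apply: hc0z].
exists m.+1; split=> //; split=> //.
have hcol : forall k, k != k0 -> B k j0 = 0.
  by move=> k kk0; move: (hno k); rewrite kk0 /= negbK => /eqP.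
apply: (@single_step _ B m sg tu s t ks mo j0 Blk1) => //.
- move=> c cj0; apply/eqP; apply: contraT => hc0.
  have [_ [_ [_ h2]]] := hp j0 c k0 (ltac:(by rewrite eq_sym)) hj0 hc0.
  move: h2; rewrite (@sum_point _ k0) ?sq1 // => i ik.
  by rewrite hcol ?mul0r.
- rewrite /=; have := hsm k0; move: hj0; rewrite -/k0; lia.
Qed.

Lemma reach n (B : 'M[int]_n) :
  \det B != 0 -> orthB B -> shapeB B -> pairB B ->
  forall d, exists m, (m <= n)%N /\ config B m /\ (m = n \/ (d <= m)%N).
Proof.
move=> hdet ho hs hp; elim=> [|d [m [mn [hc hd]]]].
  exists 0%N; split=> //; split; last by right.
  exists 1%g, 1%g, (fun _ => 1), (fun _ => 1), [::].
  by split=> //; split=> //; split=> //; split=> //.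
case: (eqVneq m n) => [e|ne]; first by exists m; split=> //; split=> //; left.
case: hd => [e|hd]; first by rewrite e eqxx in ne.
have mn' : (m < n)%N by rewrite ltn_neqAle ne.
case: hc => [sg [tu [s [t [ks hc]]]]].
have [m' [h1 [h2 h3]]] := step hdet ho hs hp hc mn'.
exists m'; split=> //; split=> //; right; lia.
Qed.

Lemma final_form n (B : 'M[int]_n) :
  \det B != 0 -> orthB B -> shapeB B -> pairB B ->
  exists (sg tu : 'S_n) (s t : 'I_n -> int) ks, blks_size ks = n /\
   (forall i, s i * s i = 1) /\ (forall j, t j * t j = 1) /\
   (forall i j, s i * t j * B (sg i) (tu j) = blkdiag_entry ks i j).
Proof.
move=> hdet ho hs hp.
have [m [mn [[sg [tu [s [t [ks [hsz [hss [hts [hblk _]]]]]]]]] hd]]] := reach hdet ho hs hp n.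
have mN : m = n by case: hd => // h; apply/eqP; rewrite eqn_leq mn h.
subst m.
exists sg, tu, s, t, ks; split; first done. split; first done. split; first done.
move=> i j; apply: hblk; rewrite ?mN; exact: ltn_ord.
Qed.

Lemma forward n (L : 'cV[int]_n -> Prop) :
  orthogonal_sublattice L -> cubiquitous L ->
  exists (P : 'M[int]_n) (B : 'M[int]_n),
     change_of_basis P /\ is_basis_of L B /\ allowed_block_diag (P *m B).
Proof.
move=> [B [hb hdot]] hc.
have ho := orthB_of hdot.
have hdet : \det B != 0 by case: hb.
have [sg [tu [s [t [ks [hsz [hss [hts hblk]]]]]]]] :=
  final_form hdet ho (shape_mat hc hb ho) (pair_mat hc hb ho).
set P : 'M[int]_n := \matrix_(i, k) (s i * (sg i == k)%:R).
set Q : 'M[int]_n := \matrix_(k, j) (t j * (tu j == k)%:R).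
have hP : P^T *m P = 1%:M.
  apply/matrixP => k k'; rewrite !mxE.
  rewrite (@sum_point _ ((sg^-1)%g k)); last first.
    move=> i ik; rewrite !mxE; have -> : (sg i == k) = false.
      by apply/negbTE; apply: contra ik => /eqP <-; rewrite permK.
    by rewrite mulr0 mul0r.
  rewrite !mxE permKV eqxx mulr1 mulrA hss mul1r.
  by case: (k == k').
have hQ : Q^T *m Q = 1%:M.
  apply/matrixP => j j'; rewrite !mxE.
  rewrite (@sum_point _ (tu j)); last first.
    move=> k kj; rewrite !mxE eq_sym (negbTE kj).
    by rewrite mulr0 mul0r.
  rewrite !mxE eqxx mulr1 (inj_eq perm_inj) eq_sym.
  case: (eqVneq j j') => [<-|h]; [by rewrite /= mulr1n mulr1 ?mulrA hts | by rewrite /= ?mulr0n !mulr0].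
have hQ' : Q *m Q^T = 1%:M by apply: mulmx1C.
exists P, (B *m Q); split=> //; split.
  split.
    move=> x; split.
      case: hb => [hL _] /hL [c ->]; exists (Q^T *m c).
      by rewrite mulmxA -(mulmxA B) hQ' mulmx1.
    case: hb => [hL _] [c ->]; apply/hL; exists (Q *m c); by rewrite mulmxA.
  rewrite det_mulmx mulf_neq0 //.
  have := congr1 determinant hQ; rewrite det_mulmx det_tr det1 => h.
  by apply/eqP => h0; move: h; rewrite h0 mulr0.
exists ks; split=> //.
apply/matrixP => i j; rewrite !mxE -hblk.
rewrite (@sum_point _ (sg i)); last first.
  by move=> k ki; rewrite !mxE eq_sym (negbTE ki) mulr0 mul0r.
rewrite !mxE eqxx mulr1.
rewrite (@sum_point _ (tu j)); last first.
  by move=> k kj; rewrite !mxE eq_sym (negbTE kj) mulr0 mulr0.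
rewrite !mxE eqxx mulr1; ring.
Qed.

Lemma blk_cub ks (x : nat -> int) : exists c : nat -> int, forall i, (i < blks_size ks)%N ->
  (\sum_(0 <= j < blks_size ks) blkdiag_entry ks i j * c j - x i == 0) ||
  (\sum_(0 <= j < blks_size ks) blkdiag_entry ks i j * c j - x i == 1).
Proof.
elim: ks x => [|X ks IH] x; first by exists (fun _ => 0).
rewrite bs_cons.
case: X; rewrite /blk_size ?add1n ?add2n.
- have [c hc] := IH (fun i => x i.+1).
  exists (fun j => if j is j'.+1 then c j' else x 0%N) => -[|i] hi.
    rewrite big_nat_recl //= big1 ?addr0; first by rewrite mul1r subrr eqxx.
    by move=> j _ /=; rewrite mul0r.
  rewrite big_nat_recl //= mul0r add0r.
  exact: hc.
- have [c hc] := IH (fun i => x i.+1).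
  set q := ((x 0%N + 1) %/ 2)%Z.
  have hq := divz_eq (x 0%N + 1) 2.
  have r0 : 0 <= ((x 0%N + 1) %% 2)%Z by apply: modz_ge0.
  have r2 : ((x 0%N + 1) %% 2)%Z < 2 by apply: ltz_pmod.
  exists (fun j => if j is j'.+1 then c j' else q) => -[|i] hi.
    rewrite big_nat_recl //= big1 ?addr0; last by move=> j _ /=; rewrite mul0r.
    rewrite -/q; move: hq; set r := ((x 0%N + 1) %% 2)%Z => hq.
    have : (r = 0) \/ (r = 1) by lia.
    case=> hr; [apply/orP; right | apply/orP; left]; apply/eqP; lia.
  rewrite big_nat_recl //= mul0r add0r.
  exact: hc.
- have [c hc] := IH (fun i => x i.+2).
  set z := x 0%N + x 1%N.
  set q := (z %/ 2)%Z. set r := (z %% 2)%Z.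
  have hq : z = q * 2 + r by apply: divz_eq.
  have r0 : 0 <= r by apply: modz_ge0.
  have r2 : r < 2 by apply: ltz_pmod.
  exists (fun j => if j is j'.+2 then c j' else if j is 0%N then q + r else x 1%N - q) => -[|[|i]] hi.
  + rewrite big_nat_recl //= big_nat_recl //= big1 ?addr0; last by move=> j _ /=; rewrite mul0r.
    apply/orP; left; apply/eqP; move: hq; rewrite /z; lia.
  + rewrite big_nat_recl //= big_nat_recl //= big1 ?addr0; last by move=> j _ /=; rewrite mul0r.
    have : (r = 0) \/ (r = 1) by lia.
    case=> hr; [apply/orP; left | apply/orP; right]; apply/eqP; move: hq; rewrite /z; lia.
  + rewrite big_nat_recl //= big_nat_recl //= !mul0r !add0r.
    under eq_bigr => j _ do rewrite !subSS !subn0.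
    exact: hc.
Qed.

Lemma D_cub n ks (x : 'cV[int]_n) : blks_size ks = n ->
  exists c : 'cV[int]_n, forall i,
   ((\matrix_(i < n, j < n) blkdiag_entry ks i j) *m c - x) i 0 = 0 \/
   ((\matrix_(i < n, j < n) blkdiag_entry ks i j) *m c - x) i 0 = 1.
Proof.
move=> hn.
set x' : nat -> int := fun i => if (insub i : option 'I_n) is Some o then x o 0 else 0.
have [c hc] := blk_cub ks x'.
exists (\col_j c j) => i; rewrite !mxE.
have := hc i; rewrite hn ltn_ord => /(_ erefl).
rewrite big_mkord /x' valK.
under [X in X - _ = 0]eq_bigr => j _ do rewrite !mxE.
under [X in X - _ = 1]eq_bigr => j _ do rewrite !mxE.
by case/orP => /eqP ->; [left | right].
Qed.

Lemma rowprod0 n (a : 'I_n -> int) : \sum_i a i * a i = 1 -> forall i i', i != i' -> a i * a i' = 0.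
Proof.
move=> h i i' ii'.
have := @sum_ge_2terms _ i i' (fun k => a k * a k) ii' (fun k => sqge0 (a k)).
rewrite /= h => h2.
have : (a i = 0) \/ (a i' = 0).
  case: (boolP (a i == 0)) => [/eqP|h1]; first by left.
  case: (boolP (a i' == 0)) => [/eqP|h3]; first by right.
  have := nsq (a i); have := nsq (a i'); move: h1 h3 h2; lia.
by case=> ->; rewrite ?mul0r ?mulr0.
Qed.

Lemma backward n (L : 'cV[int]_n -> Prop) :
  (exists (P : 'M[int]_n) (B : 'M[int]_n),
     change_of_basis P /\ is_basis_of L B /\ allowed_block_diag (P *m B)) -> cubiquitous L.
Proof.
move=> [P [B [hP [[hL hdet] [ks [hn hD]]]]]] x.
have hP' : P *m P^T = 1%:M by apply: mulmx1C.
have hcol : forall i, \sum_k P k i * P k i = 1.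
  move=> i; move/matrixP: hP => /(_ i i); rewrite !mxE eqxx => h.
  by transitivity (\sum_k P^T i k * P k i); [apply: eq_bigr => k _; rewrite !mxE | rewrite h].
have hrow : forall k, \sum_i P k i * P k i = 1.
  move=> k; move/matrixP: hP' => /(_ k k); rewrite !mxE eqxx => h.
  by transitivity (\sum_i P k i * P^T i k); [apply: eq_bigr => i _; rewrite !mxE | rewrite h].
set sgr := fun k => \sum_i P k i.
have hps : forall k i, P k i * sgr k = P k i * P k i.
  move=> k i; rewrite /sgr mulr_sumr (bigD1 i) //= big1 ?addr0 //.
  by move=> i' hi'; apply: (rowprod0 (hrow k)); rewrite eq_sym.
have hsg : forall k, sgr k = 1 \/ sgr k = -1.
  move=> k; apply: pm1.
  rewrite {1}/sgr mulr_suml -(hrow k); apply: eq_bigr => i _; by rewrite hps.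
set u := P *m x.
set tt : 'cV[int]_n := \col_k (if sgr k < 0 then 1 else 0).
have [c hc] := D_cub (u - tt) hn.
exists (B *m c); split.
  by apply/hL; exists c.
have hB : B = P^T *m (P *m B) by rewrite mulmxA hP mul1mx.
have hx : x = P^T *m u by rewrite /u mulmxA hP mul1mx.
have hyx : B *m c - x = P^T *m ((P *m B) *m c - u).
  by rewrite mulmxBr -hx mulmxA -hB.
move=> i; have e1 : (B *m c) i 0 - x i 0 = (B *m c - x) i 0 by rewrite !mxE.
rewrite e1 hyx mxE.
set w := P *m B *m c - u.
have hw : forall k, exists d, (d = 0 \/ d = 1) /\ w k 0 = d * sgr k.
  move=> k; have hk := hc k; rewrite -hD in hk.
  have e : ((P *m B) *m c - (u - tt)) k 0 = w k 0 + tt k 0 by rewrite /w !mxE; ring.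
  have ttk : tt k 0 = (if sgr k < 0 then 1 else 0) by rewrite /tt mxE.
  rewrite e ttk in hk.
  move: hk; generalize (w k 0) => wk hk.
  case: (hsg k) => hs; move: hk; rewrite -/(sgr k) hs /= => hk.
    by exists wk; split; [move: hk; lia | rewrite mulr1].
  by exists (- wk); split; [move: hk; lia | ring].
have -> : \sum_j P^T i j * w j 0 = \sum_j P^T i j * w j 0 by [].
set S := \sum_j _.
have hS : exists d : 'I_n -> int, (forall k, d k = 0 \/ d k = 1) /\ S = \sum_k d k * (P k i * P k i).
  have sg2 : forall k, sgr k * sgr k = 1 by move=> k; case: (hsg k) => ->.
  have hw' : forall k, w k 0 = (w k 0 * sgr k) * sgr k by move=> k; rewrite -mulrA sg2 mulr1.
  exists (fun k => w k 0 * sgr k); split.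
    move=> k /=; have [d [hd hwd]] := hw k; rewrite hwd -mulrA sg2 mulr1 //.
  rewrite /S; apply: eq_bigr => k _; rewrite [P^T _ _]mxE -hps {1}hw'; ring.
case: hS => d [hd ->].
have h1 : 0 <= \sum_k d k * (P k i * P k i).
  apply: sumr_ge0 => k _; case: (hd k) => ->; rewrite ?mul0r ?mul1r //; exact: sqge0.
have h2 : \sum_k d k * (P k i * P k i) <= 1.
  rewrite -(hcol i); apply: ler_sum => k _; case: (hd k) => ->; rewrite ?mul0r ?mul1r //; exact: sqge0.
move: h1 h2; set T := \sum_k _ => h1 h2.
apply/orP; have : (T = 0) \/ (T = 1) by lia.
by case=> ->; [left | right].
Qed.

Unset Implicit Arguments.

Theorem theorem1p5 (n : nat) (L : 'cV[int]_n -> Prop) :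
  orthogonal_sublattice L ->
  (cubiquitous L <->
   exists (P : 'M[int]_n) (B : 'M[int]_n),
     change_of_basis P /\ is_basis_of L B /\ allowed_block_diag (P *m B)).
Proof.
move=> ho; split; [exact: forward ho | exact: backward].
Qed.
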